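(* Let $(\mathcal{V},\mathcal{B})$ be a Steiner triple system (a $(2,3,V)$-Steiner system) in which every point lies in exactly $R$ blocks, with embedding operators $\{\mathbf{E}_v\}_{v\in\mathcal{V}}$. Let $\{\varphi_s\}_{s=1}^{R+1}$ be a unimodular simplex in $\mathbb{C}^R$ with Naimark complement $\{a_s\}_{s=1}^{R+1}\subset\mathbb{C}$, and let $\{\psi_t\}_{t=1}^{V+1}$ be a unimodular simplex in $\mathbb{C}^\mathcal{V}$ with Naimark complement $\{b_t\}_{t=1}^{V+1}\subset\mathbb{C}$. Then the ensemble \[ \Big\{\mathbf{E}_v\varphi_s\oplus\sqrt{2}\,a_s\delta_v\oplus 0\Big\}_{s\in[R+1],\ v\in\mathcal{V}} \cup\Big\{0_\mathcal{B}\oplus\sqrt{\tfrac{1}{2}}\,\psi_t\oplus\sqrt{\tfrac{3}{2}}\,b_t\Big\}_{t=1}^{V+1} \] forms an equiangular tight frame in $\mathbb{C}^\mathcal{B}\oplus\mathbb{C}^\mathcal{V}\oplus\mathbb{C}$.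
   Context: A $(2,K,V)$-Steiner system is a set $\mathcal{V}$ of $V$ points with a collection $\mathcal{B}$ of $K$-element subsets (blocks) such that every 2-element subset of $\mathcal{V}$ lies in exactly one block; each point then lies in the same number $R$ of blocks. For a finite set $\mathcal{S}$, $\{\delta_s\}_{s\in\mathcal{S}}$ is the standard orthonormal basis of $\mathbb{C}^\mathcal{S}$. For $v\in\mathcal{V}$, an embedding operator $\mathbf{E}_v\colon\mathbb{C}^R\to\mathbb{C}^\mathcal{B}$ is a linear map sending $\{\delta_r\}_{r=1}^R$ bijectively onto $\{\delta_b: b\in\mathcal{B}, v\in b\}$. A complex Hadamard matrix of size $n$ is an $n\times n$ matrix $\mathbf{H}$ with entries of modulus 1 and $\mathbf{H}\mathbf{H}^*=n\mathbf{I}$. A unimodular simplex in $\mathbb{C}^{n-1}$ is the sequence of $n$ columns of the matrix obtained by deleting one row of an $n\times n$ complex Hadamard matrix; the entries of the deleted row, indexed by column, form its Naimark complement. An equiangular tight frame (ETF) in a finite-dimensional Hilbert space $\mathcal{H}$ is a finite sequence $\{\phi_i\}_{i=1}^N$ of nonzero vectors of equal norm such that $|\langle\phi_i,\phi_j\rangle|$ is the same for all $i\neq j$ and the frame operator $x\mapsto\sum_i\langle x,\phi_i\rangle\phi_i$ is a scalar multiple of the identity on $\mathcal{H}$. *)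

(* Defs.v *)
From HB Require Import structures.
From mathcomp Require Import all_boot all_order all_algebra.
Set Implicit Arguments. Unset Strict Implicit. Unset Printing Implicit Defensive.
Import Order.TTheory GRing.Theory Num.Theory.
Local Open Scope ring_scope.

Definition dotv (C : numClosedFieldType) (d : nat) (x y : 'cV[C]_d) : C :=
  \sum_(i < d) x i 0 * (y i 0)^*.

Definition adjmx (C : numClosedFieldType) m n (A : 'M[C]_(m, n)) : 'M[C]_(n, m) :=
  (map_mx (fun z => z^*) A)^T.

Definition is_complex_hadamard (C : numClosedFieldType) (n : nat) (H : 'M[C]_n) :=
  (forall i j, `|H i j| = 1) /\ H *m adjmx H = (n%:R)%:M.

(* unimodular simplex in C^n obtained from an (n+1)x(n+1) Hadamard matrix H by
   deleting row k: s-th vector, and its Naimark complement entry *)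
Definition simplex_vec (C : numClosedFieldType) (n : nat) (H : 'M[C]_n.+1)
  (k : 'I_n.+1) (s : 'I_n.+1) : 'cV[C]_n := \col_(r < n) H (lift k r) s.
Definition naimark (C : numClosedFieldType) (n : nat) (H : 'M[C]_n.+1)
  (k : 'I_n.+1) (s : 'I_n.+1) : C := H k s.

Definition is_ETF (C : numClosedFieldType) (I : finType) (d : nat)
  (phi : I -> 'cV[C]_d) : Prop :=
  [/\ forall i, phi i != 0,
      forall i j, dotv (phi i) (phi i) = dotv (phi j) (phi j),
      (forall i j i' j', i != j -> i' != j' ->
          `|dotv (phi i) (phi j)| = `|dotv (phi i') (phi j')|) &
      exists c : C, forall x : 'cV[C]_d,
          \sum_(i : I) dotv x (phi i) *: phi i = c *: x].

Definition is_STS (V nb : nat) (blk : 'I_nb -> {set 'I_V}) : Prop :=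
  [/\ injective blk,
      forall b, #|blk b| = 3%N &
      forall x y : 'I_V, x != y ->
        exists! b : 'I_nb, (x \in blk b) && (y \in blk b)].

Definition is_embedding (C : numClosedFieldType) (V nb R : nat)
  (blk : 'I_nb -> {set 'I_V}) (v : 'I_V) (E : 'M[C]_(nb, R)) : Prop :=
  exists f : 'I_R -> 'I_nb,
    [/\ injective f,
        forall b, (v \in blk b) <-> (exists r, f r = b) &
        E = \matrix_(b, r) (b == f r)%:R].

Definition ensemble (C : numClosedFieldType) (V nb R : nat)
  (E : 'I_V -> 'M[C]_(nb, R)) (H1 : 'M[C]_R.+1) (k1 : 'I_R.+1)
  (H2 : 'M[C]_V.+1) (k2 : 'I_V.+1)
  (i : ('I_R.+1 * 'I_V) + 'I_V.+1) : 'cV[C]_(nb + (V + 1)) :=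
  match i with
  | inl (s, v) =>
      col_mx (E v *m simplex_vec H1 k1 s)
        (col_mx ((sqrtC 2 * naimark H1 k1 s) *: (delta_mx v 0 : 'cV[C]_V))
                (0 : 'cV[C]_1))
  | inr t =>
      col_mx (0 : 'cV[C]_nb)
        (col_mx (sqrtC (2^-1) *: simplex_vec H2 k2 t)
                (const_mx (sqrtC (3 / 2) * naimark H2 k2 t) : 'cV[C]_1))
  end.

(* Main.v *)
Require Import Defs.
From mathcomp Require Import all_boot all_order all_algebra.
From mathcomp Require Import ring zify.
Import Order.TTheory GRing.Theory Num.Theory.
Set Implicit Arguments. Unset Strict Implicit. Unset Printing Implicit Defensive.
Local Open Scope ring_scope.

Lemma had_unit (C : numClosedFieldType) n (H : 'M[C]_n) :
  is_complex_hadamard H -> forall i j, H i j * (H i j)^* = 1.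
Proof. by case=> hn _ i j; rewrite -normCK hn expr1n. Qed.

Lemma had_row (C : numClosedFieldType) n (H : 'M[C]_n) :
  is_complex_hadamard H -> forall i j,
  \sum_s H i s * (H j s)^* = (i == j)%:R * n%:R.
Proof.
case=> _ hm i j; have := congr1 (fun M : 'M[C]_n => M i j) hm.
rewrite !mxE mulr_natl => <-; apply: eq_bigr => s _; rewrite !mxE.
by [].
Qed.

Lemma had_col (C : numClosedFieldType) n (H : 'M[C]_n.+1) :
  is_complex_hadamard H -> forall s s',
  \sum_r H r s * (H r s')^* = (s == s')%:R * n.+1%:R.
Proof.
case=> _ hm s s'.
have n0 : (n.+1%:R : C) != 0 by rewrite pnatr_eq0.
have h1 : H *m (n.+1%:R^-1 *: adjmx H) = 1%:M.
  by rewrite -scalemxAr hm scale_scalar_mx (mulVf n0).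
have := congr1 (fun M : 'M[C]_n.+1 => M s' s) (mulmx1C h1).
rewrite !mxE => h2.
have : \sum_r (H r s')^* * H r s = (s' == s)%:R * n.+1%:R.
  rewrite -h2 mulr_suml; apply: eq_bigr => r _.
  by rewrite !mxE [RHS]mulrC !mulrA mulfV // mul1r.
rewrite eq_sym => <-; apply: eq_bigr => r _; exact: mulrC.
Qed.

Lemma sts_count (V nb R : nat) (blk : 'I_nb -> {set 'I_V}) :
  is_STS blk -> (forall v : 'I_V, #|[set b | v \in blk b]| = R) ->
  forall v0 : 'I_V, V = (2 * R).+1.
Proof.
case=> _ h3 hu hR v0.
have e1 : #|[set~ v0]| = V.-1 by rewrite cardsC1 card_ord.
have e2 : forall w : 'I_V, w \in [set~ v0] ->
    (\sum_(b in [set b | v0 \in blk b]) (w \in blk b) = 1)%N.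
  move=> w; rewrite in_setC1 => wv.
  have vw : v0 != w by rewrite eq_sym.
  have [b0 [/andP [vb0 wb0] hb0]] := hu v0 w vw.
  rewrite (bigD1 b0) ?inE //= wb0 big1 // => b /andP [].
  rewrite inE => vb bb0; case wb: (w \in blk b) => //.
  by move: bb0; rewrite (hb0 b) ?eqxx // vb wb.
have e3 : forall b, v0 \in blk b -> (\sum_(w in [set~ v0]) (w \in blk b) = 2)%N.
  move=> b vb; rewrite -big_mkcondr /= sum1_card.
  have -> : #|[pred w | (w \in [set~ v0]) && (w \in blk b)]| = #|blk b :\ v0|.
    by apply: eq_card => w; rewrite !inE.
  have := cardsD1 v0 (blk b); rewrite h3.
  by rewrite vb add1n => -[].
have : V.-1 = (2 * R)%N.
  rewrite -e1 -sum1_card.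
  rewrite (eq_bigr (fun w => \sum_(b in [set b | v0 \in blk b]) (w \in blk b))%N); last first.
    by move=> w /e2 ->.
  rewrite exchange_big /=.
  rewrite (eq_bigr (fun b => 2%N)); last first.
    by move=> b; rewrite inE => vb; rewrite e3.
  by rewrite sum_nat_const hR mulnC.
move=> h; have := ltn_ord v0; lia.
Qed.

Definition eB (C : numClosedFieldType) nb R (f : 'I_R -> 'I_nb)
  (g : 'I_R -> C) (b : 'I_nb) : C := \sum_r (b == f r)%:R * g r.

Lemma eB_f (C : numClosedFieldType) nb R (f : 'I_R -> 'I_nb) (g : 'I_R -> C) r0 :
  injective f -> eB f g (f r0) = g r0.
Proof.
move=> fi; rewrite /eB (bigD1 r0) //= eqxx mul1r big1 ?addr0 // => r rr0.
by rewrite (inj_eq fi) eq_sym (negbTE rr0) mul0r.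
Qed.

Lemma eB_none (C : numClosedFieldType) nb R (f : 'I_R -> 'I_nb) (g : 'I_R -> C) b :
  (forall r, f r != b) -> eB f g b = 0.
Proof.
by move=> h; rewrite /eB big1 // => r _; rewrite eq_sym (negbTE (h r)) mul0r.
Qed.

Lemma eB_case nb R (f : 'I_R -> 'I_nb) b :
  (exists r, f r = b) \/ (forall r, f r != b).
Proof.
case: (pickP [pred r | f r == b]) => [r /= /eqP <-|h]; first by left; exists r.
by right => r; apply/negbT; exact: h r.
Qed.

Lemma eB_sum (C : numClosedFieldType) nb R (f : 'I_R -> 'I_nb) (g : 'I_R -> C) :
  \sum_b eB f g b = \sum_r g r.
Proof.
rewrite /eB exchange_big /=; apply: eq_bigr => r _.
rewrite (bigD1 (f r)) //= eqxx mul1r big1 ?addr0 // => b /negbTE ->.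
by rewrite mul0r.
Qed.

Lemma eB_dot (C : numClosedFieldType) nb R (f : 'I_R -> 'I_nb) (g h : 'I_R -> C) :
  injective f -> \sum_b eB f g b * (eB f h b)^* = \sum_r g r * (h r)^*.
Proof.
move=> fi; rewrite -(eB_sum f); apply: eq_bigr => b _.
have [[r <-]|hn] := eB_case f b; first by rewrite !eB_f.
by rewrite !eB_none // mul0r.
Qed.

Lemma eB_cross (C : numClosedFieldType) nb R (f f' : 'I_R -> 'I_nb)
    (g h : 'I_R -> C) r0 r0' :
  injective f -> injective f' -> f r0 = f' r0' ->
  (forall r r', f r = f' r' -> r = r0) ->
  \sum_b eB f g b * (eB f' h b)^* = g r0 * (h r0')^*.
Proof.
move=> fi fi' e hu; rewrite (bigD1 (f r0)) //= eB_f // e eB_f //.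
rewrite big1 ?addr0 // => b bn.
have [[r er]|hn] := eB_case f b; last by rewrite eB_none // mul0r.
have [[r' er']|hn'] := eB_case f' b; last by rewrite (eB_none h) // conjC0 mulr0.
have e2 : r = r0 by apply: (hu r r'); rewrite er er'.
by move: bn; rewrite -er e2 -e eqxx.
Qed.

Lemma had_rowL (C : numClosedFieldType) n (H : 'M[C]_n.+1) k :
  is_complex_hadamard H -> forall r r',
  \sum_s H (lift k r) s * (H (lift k r') s)^* = (r == r')%:R * n.+1%:R.
Proof. by move=> hH r r'; rewrite (had_row hH) (inj_eq (@lift_inj _ k)). Qed.

Lemma had_rowLk (C : numClosedFieldType) n (H : 'M[C]_n.+1) k :
  is_complex_hadamard H -> forall r,
  \sum_s H (lift k r) s * (H k s)^* = 0.
Proof. by move=> hH r; rewrite (had_row hH) eq_sym (negbTE (neq_lift k r)) mul0r. Qed.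

Lemma had_colL (C : numClosedFieldType) n (H : 'M[C]_n.+1) k :
  is_complex_hadamard H -> forall s s',
  \sum_r H (lift k r) s * (H (lift k r) s')^* =
    (s == s')%:R * n.+1%:R - H k s * (H k s')^*.
Proof.
move=> hH s s'; rewrite -(had_col hH) (bigD1_ord k) //=.
by rewrite addrC addrK.
Qed.

Lemma dotv_split (C : numClosedFieldType) m n (A A' : 'cV[C]_m) (B B' : 'cV[C]_n)
   (c c' : 'cV[C]_1) :
  dotv (col_mx A (col_mx B c)) (col_mx A' (col_mx B' c')) =
  dotv A A' + dotv B B' + c 0 0 * (c' 0 0)^*.
Proof.
rewrite /dotv big_split_ord /=; under eq_bigr do rewrite !col_mxEu.
rewrite -addrA; congr (_ + _).
under eq_bigr do rewrite !col_mxEd.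
rewrite big_split_ord /= big_ord1; under eq_bigr do rewrite !col_mxEu.
by rewrite !col_mxEd.
Qed.

Lemma dotvC (C : numClosedFieldType) n (x y : 'cV[C]_n) :
  dotv y x = (dotv x y)^*.
Proof.
rewrite /dotv rmorph_sum; apply: eq_bigr => i _.
by rewrite rmorphM /= conjCK mulrC.
Qed.

Lemma sqrt_conj (C : numClosedFieldType) (x : C) : 0 <= x -> (sqrtC x)^* = sqrtC x.
Proof. by move=> x0; apply: conj_Creal; apply: ger0_real; rewrite sqrtC_ge0. Qed.

Lemma sqrt_nrm (C : numClosedFieldType) (x : C) : 0 <= x -> sqrtC x * (sqrtC x)^* = x.
Proof. by move=> x0; rewrite sqrt_conj // -expr2 sqrtCK. Qed.

Lemma sumZ (C : numClosedFieldType) (I : finType) (c d : C) (X Y : I -> C) :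
  \sum_i (c * X i) * (d * Y i)^* = c * d^* * \sum_i X i * (Y i)^*.
Proof.
rewrite mulr_sumr; apply: eq_bigr => i _; rewrite rmorphM /=.
by rewrite mulrACA.
Qed.

Lemma sum_pair (C : numClosedFieldType) (I J : finType) (G : I * J -> C) :
  \sum_p G p = \sum_i \sum_j G (i, j).
Proof. by rewrite pair_bigA; apply: eq_bigr => -[]. Qed.

Lemma frame_of_entries (C : numClosedFieldType) (I : finType) d
  (Phi : I -> 'cV[C]_d) (c : C) :
  (forall p q, \sum_i Phi i p 0 * (Phi i q 0)^* = (p == q)%:R * c) ->
  forall x, \sum_i dotv x (Phi i) *: Phi i = c *: x.
Proof.
move=> hF x; apply/matrixP => p j; rewrite ord1 summxE !mxE.
under eq_bigr do rewrite mxE /dotv mulr_suml.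
rewrite exchange_big /=.
rewrite (eq_bigr (fun q => x q 0 * ((p == q)%:R * c))); last first.
  move=> q _; rewrite -hF mulr_sumr; apply: eq_bigr => i _.
  by rewrite mulrAC mulrA.
rewrite (bigD1 p) //= eqxx mul1r big1 ?addr0; first by rewrite mulrC.
by move=> q /negbTE; rewrite eq_sym => ->; rewrite mul0r mulr0.
Qed.

Lemma emb_entry (C : numClosedFieldType) V nb R (blk : 'I_nb -> {set 'I_V}) v
  (E : 'M[C]_(nb, R)) : is_embedding blk v E ->
  exists f : 'I_R -> 'I_nb, [/\ injective f,
    forall b, (v \in blk b) <-> (exists r, f r = b) &
    forall (H : 'M[C]_R.+1) k s b,
      (E *m simplex_vec H k s) b 0 = eB f (fun r => H (lift k r) s) b].
Proof.
case=> f [fi hf ->]; exists f; split => // H k s b.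
by rewrite mxE; apply: eq_bigr => r _; rewrite !mxE.
Qed.

Lemma pv_BB (C : numClosedFieldType) V nb R (blk : 'I_nb -> {set 'I_V}) v
  (f : 'I_R -> 'I_nb) (H : 'M[C]_R.+1) (k : 'I_R.+1) :
  injective f -> (forall b, (v \in blk b) <-> (exists r, f r = b)) ->
  is_complex_hadamard H -> forall b b',
  \sum_s eB f (fun r => H (lift k r) s) b * (eB f (fun r => H (lift k r) s) b')^*
    = (v \in blk b)%:R * (b == b')%:R * R.+1%:R.
Proof.
move=> fi hf hH b b'.
have [[r er]|hn] := eB_case f b; last first.
  rewrite big1; last by move=> s _; rewrite eB_none // mul0r.
  case vb: (v \in blk b) => //; last by rewrite !mul0r.
  by have [r er] := (hf b).1 vb; have := hn r; rewrite er eqxx.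
have vb : v \in blk b by apply/(hf b); exists r.
rewrite vb mul1r -er.
have [[r' er']|hn'] := eB_case f b'; last first.
  rewrite big1; last by move=> s _; rewrite (eB_none _ hn') conjC0 mulr0.
  case: (f r =P b') => [e|_]; last by rewrite mul0r.
  by have := hn' r; rewrite e eqxx.
rewrite -er'; under eq_bigr do rewrite !eB_f //.
by rewrite (had_rowL k hH) (inj_eq fi).
Qed.

Lemma pv_BV (C : numClosedFieldType) nb R (f : 'I_R -> 'I_nb) (H : 'M[C]_R.+1)
  (k : 'I_R.+1) : injective f ->
  is_complex_hadamard H -> forall b c,
  \sum_s eB f (fun r => H (lift k r) s) b * (c * H k s)^* = 0.
Proof.
move=> fi hH b c.
have [[r <-]|hn] := eB_case f b; last by rewrite big1 // => s _; rewrite eB_none // mul0r.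
rewrite (eq_bigr (fun s => c^* * (H (lift k r) s * (H k s)^*))); last first.
  by move=> s _; rewrite eB_f // rmorphM /= mulrCA.
by rewrite -mulr_sumr (had_rowLk k hH) mulr0.
Qed.

Lemma pv_VB (C : numClosedFieldType) nb R (f : 'I_R -> 'I_nb) (H : 'M[C]_R.+1)
  (k : 'I_R.+1) : injective f ->
  is_complex_hadamard H -> forall b c,
  \sum_s (c * H k s) * (eB f (fun r => H (lift k r) s) b)^* = 0.
Proof.
move=> fi hH b c.
rewrite -[LHS]conjCK rmorph_sum /=.
rewrite (eq_bigr (fun s => eB f (fun r => H (lift k r) s) b * (c * H k s)^*)).
  by rewrite (pv_BV k fi hH) conjC0.
by move=> s _; rewrite rmorphM /= conjCK mulrC.
Qed.

Definition ens (C : numClosedFieldType) (V nb R : nat)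
  (E : 'I_V -> 'M[C]_(nb, R)) (H1 : 'M[C]_R.+1) (k1 : 'I_R.+1)
  (H2 : 'M[C]_V.+1) (k2 : 'I_V.+1) (i : ('I_R.+1 * 'I_V) + 'I_V.+1) :
  'cV[C]_(nb + (V + 1)) := ensemble E H1 k1 H2 k2 i.
Arguments ens : simpl never.

Lemma ent_e1 (C : numClosedFieldType) (V nb R : nat) (E : 'I_V -> 'M[C]_(nb, R))
  (H1 : 'M[C]_R.+1) (k1 : 'I_R.+1) (H2 : 'M[C]_V.+1) (k2 : 'I_V.+1) (s : 'I_R.+1) (v : 'I_V) (b : 'I_nb) :
  ens E H1 k1 H2 k2 (inl (s, v)) (lshift (V + 1) b) 0 = (E v *m simplex_vec H1 k1 s) b 0.
Proof. rewrite /ens /ensemble ?col_mxEu ?col_mxEd ?col_mxEu ?col_mxEd !mxE //; rewrite ?andbT //. Qed.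

Lemma ent_e2 (C : numClosedFieldType) (V nb R : nat) (E : 'I_V -> 'M[C]_(nb, R))
  (H1 : 'M[C]_R.+1) (k1 : 'I_R.+1) (H2 : 'M[C]_V.+1) (k2 : 'I_V.+1) (s : 'I_R.+1) (v : 'I_V) (w : 'I_V) :
  ens E H1 k1 H2 k2 (inl (s, v)) (rshift nb (lshift 1 w)) 0 = (sqrtC 2 * (w == v)%:R) * H1 k1 s.
Proof. rewrite /ens /ensemble ?col_mxEu ?col_mxEd ?col_mxEu ?col_mxEd !mxE //; by rewrite andbT mulrAC. Qed.

Lemma ent_e3 (C : numClosedFieldType) (V nb R : nat) (E : 'I_V -> 'M[C]_(nb, R))
  (H1 : 'M[C]_R.+1) (k1 : 'I_R.+1) (H2 : 'M[C]_V.+1) (k2 : 'I_V.+1) (s : 'I_R.+1) (v : 'I_V) (z : 'I_1) :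
  ens E H1 k1 H2 k2 (inl (s, v)) (rshift nb (rshift V z)) 0 = 0.
Proof. rewrite /ens /ensemble ?col_mxEu ?col_mxEd ?col_mxEu ?col_mxEd !mxE //; rewrite ?andbT //. Qed.

Lemma ent_e4 (C : numClosedFieldType) (V nb R : nat) (E : 'I_V -> 'M[C]_(nb, R))
  (H1 : 'M[C]_R.+1) (k1 : 'I_R.+1) (H2 : 'M[C]_V.+1) (k2 : 'I_V.+1) (t : 'I_V.+1) (b : 'I_nb) :
  ens E H1 k1 H2 k2 (inr t) (lshift (V + 1) b) 0 = 0.
Proof. rewrite /ens /ensemble ?col_mxEu ?col_mxEd ?col_mxEu ?col_mxEd !mxE //; rewrite ?andbT //. Qed.

Lemma ent_e5 (C : numClosedFieldType) (V nb R : nat) (E : 'I_V -> 'M[C]_(nb, R))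
  (H1 : 'M[C]_R.+1) (k1 : 'I_R.+1) (H2 : 'M[C]_V.+1) (k2 : 'I_V.+1) (t : 'I_V.+1) (w : 'I_V) :
  ens E H1 k1 H2 k2 (inr t) (rshift nb (lshift 1 w)) 0 = sqrtC (2^-1) * H2 (lift k2 w) t.
Proof. rewrite /ens /ensemble ?col_mxEu ?col_mxEd ?col_mxEu ?col_mxEd !mxE //; rewrite ?andbT //. Qed.

Lemma ent_e6 (C : numClosedFieldType) (V nb R : nat) (E : 'I_V -> 'M[C]_(nb, R))
  (H1 : 'M[C]_R.+1) (k1 : 'I_R.+1) (H2 : 'M[C]_V.+1) (k2 : 'I_V.+1) (t : 'I_V.+1) (z : 'I_1) :
  ens E H1 k1 H2 k2 (inr t) (rshift nb (rshift V z)) 0 = sqrtC (3 / 2) * H2 k2 t.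
Proof. rewrite /ens /ensemble ?col_mxEu ?col_mxEd ?col_mxEu ?col_mxEd !mxE //; rewrite ?andbT //. Qed.

Lemma dotv_ent (C : numClosedFieldType) m n (x y : 'cV[C]_(m + (n + 1))) :
  dotv x y = \sum_(b < m) x (lshift (n + 1) b) 0 * (y (lshift (n + 1) b) 0)^*
    + \sum_(w < n) x (rshift m (lshift 1 w)) 0 * (y (rshift m (lshift 1 w)) 0)^*
    + x (rshift m (rshift n ord0)) 0 * (y (rshift m (rshift n ord0)) 0)^*.
Proof. by rewrite /dotv big_split_ord /= big_split_ord /= big_ord1 addrA. Qed.

Lemma mid_ll (C : numClosedFieldType) n (v v' : 'I_n) (c d x y : C) :
  \sum_w (c * (w == v)%:R * x) * (d * (w == v')%:R * y)^* =
  (v == v')%:R * (c * x * (d * y)^*).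
Proof.
rewrite (bigD1 v) //= big1 ?addr0; last by move=> w /negbTE ->; rewrite mulr0 !mul0r.
rewrite eqxx; case: (v == v'); rewrite ?mulr1n ?mulr0n ?mulr1 ?mul1r ?mulr0 ?mul0r ?conjC0 ?mulr0 //.
Qed.

Lemma mid_lr (C : numClosedFieldType) n (v : 'I_n) (c x : C) (Y : 'I_n -> C) :
  \sum_w (c * (w == v)%:R * x) * (Y w)^* = c * x * (Y v)^*.
Proof.
rewrite (bigD1 v) //= big1 ?addr0; last by move=> w /negbTE ->; rewrite mulr0 !mul0r.
by rewrite eqxx mulr1.
Qed.

Lemma mid_rl (C : numClosedFieldType) n (v : 'I_n) (c x : C) (Y : 'I_n -> C) :
  \sum_w (Y w) * (c * (w == v)%:R * x)^* = Y v * (c * x)^*.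
Proof.
rewrite (bigD1 v) //= big1 ?addr0; last by move=> w /negbTE ->; rewrite mulr0 mul0r conjC0 mulr0.
by rewrite eqxx mulr1.
Qed.

Lemma sum_ind (C : numClosedFieldType) (T : finType) (A : {set T}) :
  \sum_v (v \in A)%:R = #|A|%:R :> C.
Proof.
rewrite -sum1_card natr_sum [RHS]big_mkcond /=; apply: eq_bigr => v _.
by case: (v \in A).
Qed.

Lemma mid_ll2 (C : numClosedFieldType) n (w w' : 'I_n) (c d x y : C) :
  \sum_v (c * (w == v)%:R * x) * (d * (w' == v)%:R * y)^* =
  (w == w')%:R * (c * x * (d * y)^*).
Proof.
rewrite (bigD1 w) //= big1 ?addr0; last first.
  by move=> v /negbTE; rewrite eq_sym => ->; rewrite mulr0 !mul0r.
rewrite eqxx eq_sym.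
by case: (w == w'); rewrite ?mulr1n ?mulr0n ?mulr1 ?mul1r ?mulr0 ?mul0r ?conjC0 ?mulr0 //.
Qed.

Lemma had_rowkL (C : numClosedFieldType) n (H : 'M[C]_n.+1) k :
  is_complex_hadamard H -> forall r,
  \sum_s H k s * (H (lift k r) s)^* = 0.
Proof. by move=> hH r; rewrite (had_row hH) (negbTE (neq_lift k r)) mul0r. Qed.

Lemma ord3_case m n (P : 'I_(m + (n + 1)) -> Prop) :
  (forall b, P (lshift (n + 1) b)) -> (forall w, P (rshift m (lshift 1 w))) ->
  P (rshift m (rshift n ord0)) -> forall p, P p.
Proof.
move=> h1 h2 h3 p; rewrite -(splitK p); case: (split p) => [b|q] /=; first exact: h1.
rewrite -(splitK q); case: (split q) => [w|z] /=; first exact: h2.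
by rewrite (ord1 z).
Qed.

Lemma sum_I (C : numClosedFieldType) (A B T : finType) (F : (A * B) + T -> C) :
  \sum_i F i = \sum_a \sum_b F (inl (a, b)) + \sum_t F (inr t).
Proof. by rewrite big_sumType /= sum_pair. Qed.

Theorem theorem3p1 (C : numClosedFieldType) (V nb R : nat)
  (blk : 'I_nb -> {set 'I_V}) (E : 'I_V -> 'M[C]_(nb, R))
  (H1 : 'M[C]_R.+1) (k1 : 'I_R.+1) (H2 : 'M[C]_V.+1) (k2 : 'I_V.+1) :
  is_STS blk ->
  (forall v : 'I_V, #|[set b | v \in blk b]| = R) ->
  (forall v, is_embedding blk v (E v)) ->
  is_complex_hadamard H1 ->
  is_complex_hadamard H2 ->
  is_ETF (ensemble E H1 k1 H2 k2).
Proof.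
move=> hS hR hE hH1 hH2.
have Vc : forall v0 : 'I_V, V = (2 * R).+1 := sts_count hS hR.
have -> : ensemble E H1 k1 H2 k2 = ens E H1 k1 H2 k2 by [].
set Phi := ens E H1 k1 H2 k2.
have [_ h3 _] := hS.
have u1 := had_unit hH1; have u2 := had_unit hH2.
have s2 : sqrtC 2 * (sqrtC 2)^* = 2 :> C by rewrite sqrt_nrm // ler0n.
have sh : sqrtC (2^-1) * (sqrtC (2^-1))^* = 2^-1 :> C by rewrite sqrt_nrm // invr_ge0 ler0n.
have s3 : sqrtC (3/2) * (sqrtC (3/2))^* = 3/2 :> C.
  by rewrite sqrt_nrm // divr_ge0 // ler0n.
have nL : forall s v, dotv (Phi (inl (s, v))) (Phi (inl (s, v))) = R.+1%:R + 1.
  move=> s v; have [f [fi hf ef]] := emb_entry (hE v).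
  rewrite dotv_ent; under eq_bigr do rewrite ent_e1 ef.
  rewrite eB_dot // (had_colL k1 hH1) eqxx.
  under eq_bigr do rewrite ent_e2.
  rewrite mid_ll eqxx ent_e3 mul0r addr0 rmorphM /= mulrACA s2 u1.
  rewrite (_ : true%:R = 1 :> C) //; ring.
have nR : forall t, dotv (Phi (inr t)) (Phi (inr t)) = 2^-1 * V.+1%:R + 1.
  move=> t; rewrite dotv_ent; under eq_bigr do rewrite ent_e4 mul0r.
  rewrite big1_eq add0r; under eq_bigr do rewrite ent_e5.
  rewrite sumZ sh (had_colL k2 hH2) eqxx !ent_e6 rmorphM /= mulrACA s3 u2.
  rewrite (_ : true%:R = 1 :> C) //; by field.
have n1 := hH1.1; have n2 := hH2.1.
have lr : forall s v t, `|dotv (Phi (inl (s, v))) (Phi (inr t))| = 1.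
  move=> s v t; rewrite dotv_ent; under eq_bigr do rewrite ent_e4 conjC0 mulr0.
  rewrite big1_eq add0r; under eq_bigr do rewrite ent_e2 ent_e5.
  rewrite mid_lr ent_e3 mul0r addr0 rmorphM /= mulrACA normrM.
  rewrite [X in _ * X]normrM norm_conjC n1 n2 mulr1 sqrt_conj ?invr_ge0 ?ler0n //.
  rewrite -sqrtCM ?nnegrE ?invr_ge0 ?ler0n // mulfV ?sqrtC1 ?normr1 ?mulr1 //.
  by rewrite pnatr_eq0.
have rr : forall t t', t != t' -> `|dotv (Phi (inr t)) (Phi (inr t'))| = 1.
  move=> t t' ne; rewrite dotv_ent; under eq_bigr do rewrite ent_e4 mul0r.
  rewrite big1_eq add0r; under eq_bigr do rewrite !ent_e5.
  rewrite sumZ sh (had_colL k2 hH2) (negbTE ne) !ent_e6 rmorphM /= mulrACA s3.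
  rewrite (_ : false%:R = 0 :> C) // mul0r sub0r.
  rewrite (_ : 2^-1 * - (H2 k2 t * (H2 k2 t')^*) + 3 / 2 * (H2 k2 t * (H2 k2 t')^*)
     = H2 k2 t * (H2 k2 t')^*); last by field.
  by rewrite normrM norm_conjC n2 n2 mulr1.
have ll : forall s v s' v', (s, v) != (s', v') ->
    `|dotv (Phi (inl (s, v))) (Phi (inl (s', v')))| = 1.
  move=> s v s' v' ne.
  have [f [fi hf ef]] := emb_entry (hE v).
  rewrite dotv_ent.
  case: (v =P v') => [ev|nv].
    subst v'.
    under eq_bigr do rewrite !ent_e1 !ef.
    have ns : s != s' by apply: contra ne => /eqP ->.
    rewrite eB_dot // (had_colL k1 hH1) (negbTE ns).
    under eq_bigr do rewrite !ent_e2.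
    rewrite mid_ll !ent_e3 conjC0 mulr0 addr0 eqxx.
    rewrite rmorphM /= mulrACA s2 (_ : false%:R = 0 :> C) // (_ : true%:R = 1 :> C) //.
    rewrite (_ : 0 * R.+1%:R - H1 k1 s * (H1 k1 s')^* + 1 * (2 * (H1 k1 s * (H1 k1 s')^*))
       = H1 k1 s * (H1 k1 s')^*); last by ring.
    by rewrite normrM norm_conjC !n1 mulr1.
  have [f' [fi' hf' ef']] := emb_entry (hE v').
  under eq_bigr do rewrite !ent_e1 ef ef'.
  have [_ _ hu] := hS.
  have nv' : v != v' by apply/eqP.
  have [b0 [/andP [vb0 v'b0] hb0]] := hu v v' nv'.
  have [r0 er0] := (hf b0).1 vb0.
  have [r0' er0'] := (hf' b0).1 v'b0.
  rewrite (@eB_cross C nb R f f' _ _ r0 r0') //; last first.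
  - move=> r r' e.
    have vb : v \in blk (f r) by apply/(hf (f r)); exists r.
    have v'b : v' \in blk (f r) by apply/(hf' (f r)); exists r'.
    by apply: fi; rewrite er0 (hb0 (f r)) // vb v'b.
  - by rewrite er0 er0'.
  under eq_bigr do rewrite !ent_e2.
  rewrite mid_ll !ent_e3 conjC0 mulr0 addr0.
  rewrite (negbTE nv') (_ : false%:R = 0 :> C) // mul0r addr0.
  by rewrite normrM norm_conjC !n1 mulr1.
have off : forall i j, i != j -> `|dotv (Phi i) (Phi j)| = 1.
  move=> [[s v]|t] [[s' v']|t'] ne //.
  - by apply: ll; apply: contra ne => /eqP ->.
  - by rewrite dotvC norm_conjC lr.
  - by apply: rr; apply: contra ne => /eqP ->.
have VR : forall v : 'I_V, V.+1%:R = 2 * R.+1%:R :> C.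
  by move=> v; rewrite (Vc v) (_ : ((2 * R).+2 = 2 * R.+1)%N) ?natrM //; lia.
split.
- move=> [[s v]|t]; apply/negP => /eqP h0.
    have := congr1 (fun M : 'cV[C]_(nb + (V + 1)) => M (rshift nb (lshift 1 v)) 0) h0.
    rewrite /= /Phi (ent_e2 E H1 k1 H2 k2 s v v) eqxx mxE => /eqP.
    by rewrite !mulf_eq0 sqrtC_eq0 pnatr_eq0 /= oner_eq0 /= -normr_eq0 n1 oner_eq0.
  have := congr1 (fun M : 'cV[C]_(nb + (V + 1)) => M (rshift nb (rshift V ord0)) 0) h0.
  rewrite /= /Phi (ent_e6 E H1 k1 H2 k2 t ord0) mxE => /eqP.
  by rewrite !mulf_eq0 sqrtC_eq0 -[H2 k2 t == 0]normr_eq0 n2 oner_eq0 orbF mulf_eq0 invr_eq0 !pnatr_eq0.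
- move=> [[s v]|t] [[s' v']|t']; rewrite ?nL ?nR //.
  + by rewrite (VR v); field.
  + by rewrite (VR v'); field.
- move=> i j i' j' nij ni'j'; by rewrite !off.
exists (3 / 2 * V.+1%:R); apply: frame_of_entries => p q.
rewrite sum_I /Phi.
have z0 : forall x : C, 0 * x = 0 by move=> x; rewrite mul0r.
have z1 : forall x : C, x * 0^* = 0 by move=> x; rewrite conjC0 mulr0.
elim/ord3_case: p => [b|w|]; elim/ord3_case: q => [b'|w'|].
-
  rewrite exchange_big /=.
  rewrite (eq_bigr (fun v => (v \in blk b)%:R * ((b == b')%:R * R.+1%:R))); last first.
    move=> v _; have [f [fi hf ef]] := emb_entry (hE v).
    under eq_bigr do rewrite !ent_e1 !ef.
    by rewrite (pv_BB k1 fi hf hH1) mulrA.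
  rewrite -mulr_suml sum_ind h3 eq_lshift.
  rewrite big1 ?addr0; last by move=> t _; rewrite ent_e4 z0.
  case: (b =P b') => [e|_]; last by rewrite !mul0r mulr0.
  have [v0 _] : exists v0, v0 \in blk b.
    by apply/set0Pn; rewrite -card_gt0 h3.
  rewrite (VR v0) (_ : true%:R = 1 :> C) //; by field.
-
  rewrite exchange_big big1 ?add0r; last first.
    move=> v _; have [f [fi _ ef]] := emb_entry (hE v).
    under eq_bigr do rewrite ent_e1 ent_e2 ef.
    exact: (pv_BV k1 fi hH1).
  rewrite big1 ?eq_lrshift ?mul0r // => t _; by rewrite ent_e4 z0.
-
  rewrite big1 ?add0r; last by move=> s _; rewrite big1 // => v _; rewrite ent_e3 z1.
  rewrite big1 ?eq_lrshift ?mul0r // => t _; by rewrite ent_e4 z0.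
-
  rewrite exchange_big big1 ?add0r; last first.
    move=> v _; have [f [fi _ ef]] := emb_entry (hE v).
    under eq_bigr do rewrite ent_e1 ent_e2 ef.
    exact: (pv_VB k1 fi hH1).
  rewrite big1 ?eq_rlshift ?mul0r // => t _; by rewrite ent_e4 z1.
-
  rewrite (eq_bigr (fun s => (w == w')%:R * 2)); last first.
    move=> s _; under eq_bigr do rewrite !ent_e2.
    by rewrite mid_ll2 rmorphM /= mulrACA s2 u1 mulr1.
  rewrite sumr_const card_ord -mulr_natr.
  under eq_bigr do rewrite !ent_e5.
  rewrite sumZ sh (had_rowL k2 hH2) !eq_rshift eq_lshift.
  case: (w =P w') => _.
    rewrite (_ : true%:R = 1 :> C) // (VR w); by field.
  rewrite (_ : false%:R = 0 :> C) //; by field.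
-
  rewrite big1 ?add0r; last by move=> s _; rewrite big1 // => v _; rewrite ent_e3 z1.
  under eq_bigr do rewrite ent_e5 ent_e6.
  by rewrite sumZ (had_rowLk k2 hH2) mulr0 eq_rshift eq_lrshift mul0r.
-
  rewrite big1 ?add0r; last by move=> s _; rewrite big1 // => v _; rewrite ent_e3 z0.
  rewrite big1 ?eq_rlshift ?mul0r // => t _; by rewrite ent_e4 z1.
-
  rewrite big1 ?add0r; last by move=> s _; rewrite big1 // => v _; rewrite ent_e3 z0.
  under eq_bigr do rewrite ent_e6 ent_e5.
  by rewrite sumZ (had_rowkL k2 hH2) mulr0 eq_rshift eq_rlshift mul0r.
-
  rewrite big1 ?add0r; last by move=> s _; rewrite big1 // => v _; rewrite ent_e3 z0.
  under eq_bigr do rewrite !ent_e6.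
  rewrite sumZ s3 (had_row hH2) !eqxx (_ : true%:R = 1 :> C) //; by field.
Qed.
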